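(* Let $\mathbf{w}_1,\dots,\mathbf{w}_6:\mathbb{R}\to\mathbb{R}^7$ be differentiable functions satisfying $\frac{d\mathbf{w}_1}{dt}=2\mathbf{w}_2\times\mathbf{w}_3$, $\frac{d\mathbf{w}_2}{dt}=2\mathbf{w}_1\times\mathbf{w}_3$, $\frac{d\mathbf{w}_3}{dt}=-2\mathbf{w}_1\times\mathbf{w}_2$, $\frac{d\mathbf{w}_4}{dt}=\mathbf{w}_1\times\mathbf{w}_5+\mathbf{w}_2\times\mathbf{w}_5-\mathbf{w}_3\times\mathbf{w}_4$, $\frac{d\mathbf{w}_5}{dt}=-\mathbf{w}_1\times\mathbf{w}_4+\mathbf{w}_2\times\mathbf{w}_4+\mathbf{w}_3\times\mathbf{w}_5$, $\frac{d\mathbf{w}_6}{dt}=\mathbf{w}_4\times\mathbf{w}_5$, and define $F:\mathbb{R}^3\to\mathbb{R}^7$ by $F(y_1,y_2,t)=\tfrac12(y_1^2+y_2^2)\mathbf{w}_1(t)+\tfrac12(y_1^2-y_2^2)\mathbf{w}_2(t)+y_1y_2\mathbf{w}_3(t)+y_1\mathbf{w}_4(t)+y_2\mathbf{w}_5(t)+\mathbf{w}_6(t)$. Then $\frac{\partial F}{\partial y_1}\times\frac{\partial F}{\partial y_2}=\frac{\partial F}{\partial t}$ everywhere, and $dF$ is injective at a point $(y_1,y_2,t)$ if and only if $\frac{\partial F}{\partial y_1}$ and $\frac{\partial F}{\partial y_2}$ are linearly independent there. In particular $F$ is an immersion at $(0,0,0)$ if and only if $\mathbf{w}_4(0)$ and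 $\mathbf{w}_5(0)$ are linearly independent.
   Context: Let $(x_1,\dots,x_7)$ be coordinates on $\mathbb{R}^7$ with Euclidean metric $g$, and write $dx_{ijk}=dx_i\wedge dx_j\wedge dx_k$. Define $\varphi=dx_{123}+dx_{145}+dx_{167}+dx_{246}-dx_{257}-dx_{347}-dx_{356}$. The cross product $\times$ on $\mathbb{R}^7$ is defined by $g(u\times v,w)=\varphi(u,v,w)$ for all $u,v,w\in\mathbb{R}^7$. *)

(* Defs.v *)
From HB Require Import structures.
From mathcomp Require Import all_boot all_order all_algebra.
From mathcomp Require Import all_classical all_reals all_analysis.
Set Implicit Arguments. Unset Strict Implicit. Unset Printing Implicit Defensive.
Import Order.TTheory GRing.Theory Num.Theory.
Import numFieldNormedType.Exports.
Local Open Scope ring_scope.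

Section G2.
Variable R : realType.

(* coordinate indices: paper's x_1..x_7 are 'I_7 indices 0..6 *)
Definition i7 (k : nat) : 'I_7 := inord k.

(* dx_i ^ dx_j ^ dx_k (u,v,w) = det of the 3x3 minor (paper's 1-based i j k) *)
Definition dx3 (i j k : nat) (u v w : 'rV[R]_7) : R :=
  let a := fun (x : 'rV[R]_7) (l : nat) => x 0 (i7 l.-1) in
  a u i * (a v j * a w k - a v k * a w j)
  - a u j * (a v i * a w k - a v k * a w i)
  + a u k * (a v i * a w j - a v j * a w i).

Definition phi (u v w : 'rV[R]_7) : R :=
  dx3 1 2 3 u v w + dx3 1 4 5 u v w + dx3 1 6 7 u v w + dx3 2 4 6 u v w
  - dx3 2 5 7 u v w - dx3 3 4 7 u v w - dx3 3 5 6 u v w.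

Definition e7 (k : 'I_7) : 'rV[R]_7 := delta_mx 0 k.

(* cross product: g(u x v, w) = phi(u,v,w) with g Euclidean, i.e.
   the k-th coordinate of u x v is phi(u, v, e_k). *)
Definition cross (u v : 'rV[R]_7) : 'rV[R]_7 := \row_k phi u v (e7 k).

Definition F (w1 w2 w3 w4 w5 w6 : R -> 'rV[R]_7) (y1 y2 t : R) : 'rV[R]_7 :=
  (2^-1 * (y1 ^+ 2 + y2 ^+ 2)) *: w1 t + (2^-1 * (y1 ^+ 2 - y2 ^+ 2)) *: w2 t
  + (y1 * y2) *: w3 t + y1 *: w4 t + y2 *: w5 t + w6 t.

Definition dy1 (G : R -> R -> R -> 'rV[R]_7) (y1 y2 t : R) : 'rV[R]_7 :=
  derive1 (fun s => G s y2 t) y1.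
Definition dy2 (G : R -> R -> R -> 'rV[R]_7) (y1 y2 t : R) : 'rV[R]_7 :=
  derive1 (fun s => G y1 s t) y2.
Definition dt (G : R -> R -> R -> 'rV[R]_7) (y1 y2 t : R) : 'rV[R]_7 :=
  derive1 (fun s => G y1 y2 s) t.

Definition dG (G : R -> R -> R -> 'rV[R]_7) (y1 y2 t : R) (h : 'rV[R]_3)
  : 'rV[R]_7 :=
  h 0 (@inord 2 0) *: dy1 G y1 y2 t + h 0 (@inord 2 1) *: dy2 G y1 y2 t
  + h 0 (@inord 2 2) *: dt G y1 y2 t.

End G2.

(* Main.v *)
Require Import Defs.
From HB Require Import structures.
From mathcomp Require Import all_boot all_order all_algebra.
From mathcomp Require Import all_classical all_reals all_analysis.
From mathcomp.algebra_tactics Require Import ring.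
Import Order.TTheory GRing.Theory Num.Theory.
Import numFieldNormedType.Exports.
Local Open Scope ring_scope.

Lemma isdD (R : realType) (W : normedModType R) (f g : R -> W) x v df dg :
  is_derive x v f df -> is_derive x v g dg ->
  is_derive x v (fun s => f s + g s) (df + dg).
Proof. move=> Hf Hg; exact: is_deriveD. Qed.
Arguments isdD {R W f g x v df dg}.

Lemma isdZ (R : realType) (W : normedModType R) (f : R -> W) (k : R) x v df :
  is_derive x v f df -> is_derive x v (fun s => k *: f s) (k *: df).
Proof. move=> Hf; exact: is_deriveZ. Qed.
Arguments isdZ {R W f} k {x v df}.

Lemma isdcst (R : realType) (W : normedModType R) (c : W) (x v : R) :
  is_derive x v (fun _ : R => c) 0.
Proof. exact: is_derive_cst. Qed.

Lemma isdid (R : realType) (x v : R) : is_derive x v (fun s : R => s) v.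
Proof. exact: is_derive_id. Qed.

Lemma isdM (R : realType) (f g : R -> R) (x v df dg : R) :
  is_derive x v f df -> is_derive x v g dg ->
  is_derive x v (fun s => f s * g s) (f x * dg + g x * df).
Proof. move=> Hf Hg; exact: is_deriveM. Qed.

Lemma isdZl (R : realType) (k : R -> R) (w : 'rV[R]_7) (x dk : R) :
  is_derive x 1 k dk -> is_derive x 1 (fun s => k s *: w) (dk *: w).
Proof.
move=> Hk.
have hd : derivable k x 1 by case: Hk.
have hdiff : differentiable k x by apply/derivable1_diffP.
apply: DeriveDef.
  by apply/derivable1_diffP; apply: differentiableZl.
rewrite deriveE; last by apply: differentiableZl.
rewrite diffZl //= -deriveE //.
by rewrite derive_val.
Qed.

Lemma scaleRE (R : realType) (a b : R) : a *: b = a * b. Proof. by []. Qed.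

Lemma isdsq (R : realType) (x v : R) : is_derive x v (fun s : R => s ^+ 2) (x * v + x * v).
Proof.
have -> : (fun s : R => s ^+ 2) = (fun s => s * s) by apply/funext=> s; rewrite expr2.
exact: isdM.
Qed.

Ltac dtac := repeat first [ apply: isdD | apply: isdZl | apply: isdsq | apply: isdM | apply: isdid | apply: isdcst ].

Lemma dy1E (R : realType) (w1 w2 w3 w4 w5 w6 : R -> 'rV[R]_7) y1 y2 t :
  dy1 (F w1 w2 w3 w4 w5 w6) y1 y2 t = y1 *: w1 t + y1 *: w2 t + y2 *: w3 t + w4 t.
Proof.
rewrite /dy1 derive1E.
have H : is_derive y1 1 (fun s => F w1 w2 w3 w4 w5 w6 s y2 t)
   (y1 *: w1 t + y1 *: w2 t + y2 *: w3 t + w4 t).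
  apply: is_derive_eq; first by rewrite /F; dtac.
  apply/rowP => k; rewrite !mxE !scaleRE ?scaler1; by field.
by case: H.
Qed.

Lemma dy2E (R : realType) (w1 w2 w3 w4 w5 w6 : R -> 'rV[R]_7) y1 y2 t :
  dy2 (F w1 w2 w3 w4 w5 w6) y1 y2 t = y2 *: w1 t - y2 *: w2 t + y1 *: w3 t + w5 t.
Proof.
rewrite /dy2 derive1E.
have H : is_derive y2 1 (fun s => F w1 w2 w3 w4 w5 w6 y1 s t)
   (y2 *: w1 t - y2 *: w2 t + y1 *: w3 t + w5 t).
  apply: is_derive_eq; first by rewrite /F; dtac.
  apply/rowP => k; rewrite !mxE !scaleRE ?scaler1; by field.
by case: H.
Qed.

Lemma dtE (R : realType) (w1 w2 w3 w4 w5 w6 : R -> 'rV[R]_7) y1 y2 t :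
  derivable w1 t 1 -> derivable w2 t 1 -> derivable w3 t 1 ->
  derivable w4 t 1 -> derivable w5 t 1 -> derivable w6 t 1 ->
  dt (F w1 w2 w3 w4 w5 w6) y1 y2 t =
  (2^-1 * (y1 ^+ 2 + y2 ^+ 2)) *: derive1 w1 t + (2^-1 * (y1 ^+ 2 - y2 ^+ 2)) *: derive1 w2 t
  + (y1 * y2) *: derive1 w3 t + y1 *: derive1 w4 t + y2 *: derive1 w5 t + derive1 w6 t.
Proof.
move=> D1 D2 D3 D4 D5 D6.
rewrite /dt derive1E.
have H : is_derive t 1 (fun s => F w1 w2 w3 w4 w5 w6 y1 y2 s)
  ((2^-1 * (y1 ^+ 2 + y2 ^+ 2)) *: derive1 w1 t + (2^-1 * (y1 ^+ 2 - y2 ^+ 2)) *: derive1 w2 t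
  + (y1 * y2) *: derive1 w3 t + y1 *: derive1 w4 t + y2 *: derive1 w5 t + derive1 w6 t).
  apply: is_derive_eq.
    rewrite /F; exact: (isdD (isdD (isdD (isdD (isdD (isdZ _ (derivableP D1))
      (isdZ _ (derivableP D2))) (isdZ _ (derivableP D3))) (isdZ _ (derivableP D4)))
      (isdZ _ (derivableP D5))) (derivableP D6)).
  by rewrite !derive1E.
by case: H.
Qed.

Definition dot {R : realType} (x y : 'rV[R]_7) : R := \sum_k x 0 k * y 0 k.

Lemma sum7 (R : realType) (f : 'I_7 -> R) :
  \sum_k f k = f (i7 0) + (f (i7 1) + (f (i7 2) + (f (i7 3) + (f (i7 4) + (f (i7 5) + f (i7 6)))))).
Proof.
rewrite !big_ord_recl big_ord0 addr0.
by rewrite /i7; repeat (congr (_ + _)); congr f; apply/val_inj; rewrite /= inordK.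
Qed.

Lemma i7eq (m l : nat) : (m < 7)%N -> (l < 7)%N -> (i7 m == i7 l) = (m == l).
Proof. by move=> Hm Hl; rewrite -(inj_eq val_inj) /i7 /= !inordK. Qed.

Lemma crossE (R : realType) (a b : 'rV[R]_7) (m : nat) :
  cross a b 0 (i7 m) = phi a b (e7 R (i7 m)).
Proof. by rewrite mxE. Qed.

Lemma cross0 (R : realType) (a b : 'rV[R]_7) :
  cross a b 0 (i7 0) = a 0 (i7 1) * b 0 (i7 2) - a 0 (i7 2) * b 0 (i7 1) + a 0 (i7 3) * b 0 (i7 4) - a 0 (i7 4) * b 0 (i7 3) + a 0 (i7 5) * b 0 (i7 6) - a 0 (i7 6) * b 0 (i7 5).
Proof. rewrite mxE /phi /dx3 !mxE ?eqxx /= ?i7eq //=. ring. Qed.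

Lemma cross1 (R : realType) (a b : 'rV[R]_7) :
  cross a b 0 (i7 1) = a 0 (i7 2) * b 0 (i7 0) - a 0 (i7 0) * b 0 (i7 2) + a 0 (i7 3) * b 0 (i7 5) - a 0 (i7 5) * b 0 (i7 3) - a 0 (i7 4) * b 0 (i7 6) + a 0 (i7 6) * b 0 (i7 4).
Proof. rewrite mxE /phi /dx3 !mxE ?eqxx /= ?i7eq //=. ring. Qed.

Lemma cross2 (R : realType) (a b : 'rV[R]_7) :
  cross a b 0 (i7 2) = a 0 (i7 0) * b 0 (i7 1) - a 0 (i7 1) * b 0 (i7 0) - a 0 (i7 3) * b 0 (i7 6) + a 0 (i7 6) * b 0 (i7 3) - a 0 (i7 4) * b 0 (i7 5) + a 0 (i7 5) * b 0 (i7 4).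
Proof. rewrite mxE /phi /dx3 !mxE ?eqxx /= ?i7eq //=. ring. Qed.

Lemma cross3 (R : realType) (a b : 'rV[R]_7) :
  cross a b 0 (i7 3) = a 0 (i7 4) * b 0 (i7 0) - a 0 (i7 0) * b 0 (i7 4) + a 0 (i7 5) * b 0 (i7 1) - a 0 (i7 1) * b 0 (i7 5) - a 0 (i7 6) * b 0 (i7 2) + a 0 (i7 2) * b 0 (i7 6).
Proof. rewrite mxE /phi /dx3 !mxE ?eqxx /= ?i7eq //=. ring. Qed.

Lemma cross4 (R : realType) (a b : 'rV[R]_7) :
  cross a b 0 (i7 4) = a 0 (i7 0) * b 0 (i7 3) - a 0 (i7 3) * b 0 (i7 0) - a 0 (i7 6) * b 0 (i7 1) + a 0 (i7 1) * b 0 (i7 6) - a 0 (i7 5) * b 0 (i7 2) + a 0 (i7 2) * b 0 (i7 5).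
Proof. rewrite mxE /phi /dx3 !mxE ?eqxx /= ?i7eq //=. ring. Qed.

Lemma cross5 (R : realType) (a b : 'rV[R]_7) :
  cross a b 0 (i7 5) = a 0 (i7 6) * b 0 (i7 0) - a 0 (i7 0) * b 0 (i7 6) + a 0 (i7 1) * b 0 (i7 3) - a 0 (i7 3) * b 0 (i7 1) - a 0 (i7 2) * b 0 (i7 4) + a 0 (i7 4) * b 0 (i7 2).
Proof. rewrite mxE /phi /dx3 !mxE ?eqxx /= ?i7eq //=. ring. Qed.

Lemma cross6 (R : realType) (a b : 'rV[R]_7) :
  cross a b 0 (i7 6) = a 0 (i7 0) * b 0 (i7 5) - a 0 (i7 5) * b 0 (i7 0) - a 0 (i7 1) * b 0 (i7 4) + a 0 (i7 4) * b 0 (i7 1) - a 0 (i7 2) * b 0 (i7 3) + a 0 (i7 3) * b 0 (i7 2).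
Proof. rewrite mxE /phi /dx3 !mxE ?eqxx /= ?i7eq //=. ring. Qed.

Ltac crossall := rewrite !cross0 !cross1 !cross2 !cross3 !cross4 !cross5 !cross6.

Lemma lagrange (R : realType) (a b : 'rV[R]_7) :
  dot (cross a b) (cross a b) = dot a a * dot b b - dot a b ^+ 2.
Proof. rewrite /dot !sum7; crossall. ring. Qed.

Lemma ortho1 (R : realType) (a b : 'rV[R]_7) : dot a (cross a b) = 0.
Proof. rewrite /dot !sum7; crossall. ring. Qed.

Lemma ortho2 (R : realType) (a b : 'rV[R]_7) : dot b (cross a b) = 0.
Proof. rewrite /dot !sum7; crossall. ring. Qed.

Lemma dot_lin3 (R : realType) (c0 c1 c2 : R) (p q r s : 'rV[R]_7) :
  dot (c0 *: p + c1 *: q + c2 *: r) s = c0 * dot p s + c1 * dot q s + c2 * dot r s.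
Proof. rewrite /dot !sum7 !mxE. ring. Qed.

Lemma dot0l (R : realType) (s : 'rV[R]_7) : dot 0 s = 0.
Proof. by rewrite /dot big1 // => i _; rewrite mxE mul0r. Qed.

Lemma dot_sub (R : realType) (k : R) (a b : 'rV[R]_7) :
  dot (a - k *: b) (a - k *: b) = dot a a - 2 * k * dot a b + k ^+ 2 * dot b b.
Proof. rewrite /dot !sum7 !mxE. ring. Qed.

Lemma dot_eq0 (R : realType) (x : 'rV[R]_7) : dot x x = 0 -> x = 0.
Proof.
move=> H.
have Hge : forall i : 'I_7, true -> 0 <= x 0 i * x 0 i.
  by move=> i _; rewrite -expr2 sqr_ge0.
have Hs := psumr_eq0P Hge H.
apply/rowP => k; rewrite mxE.
by have /eqP := Hs k isT; rewrite mulf_eq0 orbb => /eqP.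
Qed.

Lemma free2 (R : realType) (p q : 'rV[R]_7) :
  free [:: p; q] <-> (q != 0 /\ forall k : R, p != k *: q).
Proof.
rewrite free_cons seq1_free span_seq1; split.
- case/andP => Hp Hq; split => // k; apply: contra Hp => /eqP ->.
  by apply/vlineP; exists k.
- case => Hq Hk; apply/andP; split => //; apply/negP => /vlineP [k Ek].
  by move: (Hk k); rewrite Ek eqxx.
Qed.

Lemma cross_ne0 (R : realType) (p q : 'rV[R]_7) :
  q != 0 -> (forall k : R, p != k *: q) -> dot (cross p q) (cross p q) != 0.
Proof.
move=> Hq Hk; rewrite lagrange.
have B0 : dot q q != 0 by apply: contra Hq => /eqP/dot_eq0 ->.
set k := dot p q / dot q q.
have D0 : dot (p - k *: q) (p - k *: q) != 0.
  apply/negP => /eqP/dot_eq0/eqP; rewrite subr_eq0 => /eqP E.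
  by move: (Hk k); rewrite E eqxx.
have -> : dot p p * dot q q - dot p q ^+ 2 = dot q q * dot (p - k *: q) (p - k *: q).
  by rewrite dot_sub /k; field.
by rewrite mulf_neq0.
Qed.

Definition r3 {R : realType} (x y z : R) : 'rV[R]_3 :=
  \row_j (if (val j == 0)%N then x else if (val j == 1)%N then y else z).

Lemma r3E0 (R : realType) (x y z : R) : r3 x y z 0 (@inord 2 0) = x.
Proof. by rewrite mxE /= inordK. Qed.
Lemma r3E1 (R : realType) (x y z : R) : r3 x y z 0 (@inord 2 1) = y.
Proof. by rewrite mxE /= inordK. Qed.
Lemma r3E2 (R : realType) (x y z : R) : r3 x y z 0 (@inord 2 2) = z.
Proof. by rewrite mxE /= inordK. Qed.

Lemma ord3 (j : 'I_3) : j = inord 0 \/ j = inord 1 \/ j = inord 2.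
Proof.
case: j => [[|[|[|n]]] Hj]; [left|right;left|right;right|by []];
  by apply/val_inj; rewrite /= inordK.
Qed.

Lemma inj_iff (R : realType) (p q : 'rV[R]_7) :
  injective (fun h : 'rV[R]_3 =>
    h 0 (@inord 2 0) *: p + h 0 (@inord 2 1) *: q + h 0 (@inord 2 2) *: cross p q)
  <-> free [:: p; q].
Proof.
split.
- move=> Hinj; apply/free2; split.
  + apply/negP => /eqP q0.
    have := Hinj (r3 0 1 0) (r3 0 0 0).
    rewrite !r3E0 !r3E1 !r3E2 q0 !(scale0r, scaler0, addr0) => /(_ erefl).
    move=> /(congr1 (fun h : 'rV[R]_3 => h 0 (@inord 2 1))).
    by rewrite !r3E1 => /eqP; rewrite oner_eq0.
  + move=> k; apply/negP => /eqP Ek.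
    have := Hinj (r3 1 (-k) 0) (r3 0 0 0).
    rewrite !r3E0 !r3E1 !r3E2 Ek scale1r scaleNr subrr !(scale0r, scaler0, addr0).
    move=> /(_ erefl) /(congr1 (fun h : 'rV[R]_3 => h 0 (@inord 2 0))).
    by rewrite !r3E0 => /eqP; rewrite oner_eq0.
- case/free2 => Hq Hk h h'.
  have Hc : dot (cross p q) (cross p q) != 0 := cross_ne0 _ _ _ Hq Hk.
  have Hpc := ortho1 _ p q; have Hqc := ortho2 _ p q.
  move: Hc Hpc Hqc; move: (cross p q) => c Hc Hpc Hqc /= E.
  set d0 := h 0 (inord 0) - h' 0 (inord 0).
  set d1 := h 0 (inord 1) - h' 0 (inord 1).
  set d2 := h 0 (inord 2) - h' 0 (inord 2).
  have Z : d0 *: p + d1 *: q + d2 *: c = 0.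
    transitivity ((h 0 (inord 0) *: p + h 0 (inord 1) *: q + h 0 (inord 2) *: c)
      - (h' 0 (inord 0) *: p + h' 0 (inord 1) *: q + h' 0 (inord 2) *: c)).
      by apply/rowP => k; rewrite !mxE /d0 /d1 /d2; ring.
    by rewrite E subrr.
  have d20 : d2 = 0.
    have := congr1 (fun v => dot v c) Z.
    rewrite /= dot_lin3 dot0l Hpc Hqc !mulr0 !add0r => /eqP.
    by rewrite mulf_eq0 (negPf Hc) orbF => /eqP.
  rewrite d20 scale0r addr0 in Z.
  have d00 : d0 = 0.
    have [//|d0n] := eqVneq d0 0.
    have : p = (- (d1 / d0)) *: q.
      rewrite -[p](scalerK d0n).
      have -> : d0 *: p = - (d1 *: q) by apply/eqP; rewrite -addr_eq0 Z.
      by rewrite scalerN scalerA scaleNr mulrC.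
    by move/eqP; rewrite (negPf (Hk _)).
  rewrite d00 scale0r add0r in Z.
  have d10 : d1 = 0 by move/eqP: Z; rewrite scaler_eq0 (negPf Hq) orbF => /eqP.
  apply/rowP => j; case: (ord3 j) => [->|[->|->]]; apply/eqP; rewrite -subr_eq0; apply/eqP.
  + exact: d00.
  + exact: d10.
  + exact: d20.
Qed.

Lemma phi0 (R : realType) (a b : 'rV[R]_7) :
  phi a b (e7 R (i7 0)) = a 0 (i7 1) * b 0 (i7 2) - a 0 (i7 2) * b 0 (i7 1) + a 0 (i7 3) * b 0 (i7 4) - a 0 (i7 4) * b 0 (i7 3) + a 0 (i7 5) * b 0 (i7 6) - a 0 (i7 6) * b 0 (i7 5).
Proof. by rewrite -cross0 mxE. Qed.

Lemma phi1 (R : realType) (a b : 'rV[R]_7) :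
  phi a b (e7 R (i7 1)) = a 0 (i7 2) * b 0 (i7 0) - a 0 (i7 0) * b 0 (i7 2) + a 0 (i7 3) * b 0 (i7 5) - a 0 (i7 5) * b 0 (i7 3) - a 0 (i7 4) * b 0 (i7 6) + a 0 (i7 6) * b 0 (i7 4).
Proof. by rewrite -cross1 mxE. Qed.

Lemma phi2 (R : realType) (a b : 'rV[R]_7) :
  phi a b (e7 R (i7 2)) = a 0 (i7 0) * b 0 (i7 1) - a 0 (i7 1) * b 0 (i7 0) - a 0 (i7 3) * b 0 (i7 6) + a 0 (i7 6) * b 0 (i7 3) - a 0 (i7 4) * b 0 (i7 5) + a 0 (i7 5) * b 0 (i7 4).
Proof. by rewrite -cross2 mxE. Qed.

Lemma phi3 (R : realType) (a b : 'rV[R]_7) :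
  phi a b (e7 R (i7 3)) = a 0 (i7 4) * b 0 (i7 0) - a 0 (i7 0) * b 0 (i7 4) + a 0 (i7 5) * b 0 (i7 1) - a 0 (i7 1) * b 0 (i7 5) - a 0 (i7 6) * b 0 (i7 2) + a 0 (i7 2) * b 0 (i7 6).
Proof. by rewrite -cross3 mxE. Qed.

Lemma phi4 (R : realType) (a b : 'rV[R]_7) :
  phi a b (e7 R (i7 4)) = a 0 (i7 0) * b 0 (i7 3) - a 0 (i7 3) * b 0 (i7 0) - a 0 (i7 6) * b 0 (i7 1) + a 0 (i7 1) * b 0 (i7 6) - a 0 (i7 5) * b 0 (i7 2) + a 0 (i7 2) * b 0 (i7 5).
Proof. by rewrite -cross4 mxE. Qed.

Lemma phi5 (R : realType) (a b : 'rV[R]_7) :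
  phi a b (e7 R (i7 5)) = a 0 (i7 6) * b 0 (i7 0) - a 0 (i7 0) * b 0 (i7 6) + a 0 (i7 1) * b 0 (i7 3) - a 0 (i7 3) * b 0 (i7 1) - a 0 (i7 2) * b 0 (i7 4) + a 0 (i7 4) * b 0 (i7 2).
Proof. by rewrite -cross5 mxE. Qed.

Lemma phi6 (R : realType) (a b : 'rV[R]_7) :
  phi a b (e7 R (i7 6)) = a 0 (i7 0) * b 0 (i7 5) - a 0 (i7 5) * b 0 (i7 0) - a 0 (i7 1) * b 0 (i7 4) + a 0 (i7 4) * b 0 (i7 1) - a 0 (i7 2) * b 0 (i7 3) + a 0 (i7 3) * b 0 (i7 2).
Proof. by rewrite -cross6 mxE. Qed.

Lemma row7 (R : realType) (u v : 'rV[R]_7) :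
  (forall m, (m < 7)%N -> u 0 (i7 m) = v 0 (i7 m)) -> u = v.
Proof. by move=> H; apply/rowP => k; have := H k (ltn_ord k); rewrite /i7 inord_val. Qed.

Lemma part1_alg2 (R : realType) (y1 y2 : R) (a1 a2 a3 a4 a5 : 'rV[R]_7) :
  cross (y1 *: a1 + y1 *: a2 + y2 *: a3 + a4) (y2 *: a1 - y2 *: a2 + y1 *: a3 + a5)
  = (2^-1 * (y1 ^+ 2 + y2 ^+ 2)) *: (2 *: cross a2 a3)
    + (2^-1 * (y1 ^+ 2 - y2 ^+ 2)) *: (2 *: cross a1 a3)
    + (y1 * y2) *: - (2 *: cross a1 a2)
    + y1 *: (cross a1 a5 + cross a2 a5 - cross a3 a4)
    + y2 *: (- cross a1 a4 + cross a2 a4 + cross a3 a5) + cross a4 a5.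
Proof.
apply: row7 => m Hm.
case: m Hm => [|[|[|[|[|[|[|m]]]]]]] Hm //;
  rewrite !mxE ?phi0 ?phi1 ?phi2 ?phi3 ?phi4 ?phi5 ?phi6 ?mxE; by field.
Qed.

Theorem mainTheorem5 (R : realType) (w1 w2 w3 w4 w5 w6 : R -> 'rV[R]_7) :
  (forall t : R, derivable w1 t 1) -> (forall t : R, derivable w2 t 1) ->
  (forall t : R, derivable w3 t 1) -> (forall t : R, derivable w4 t 1) ->
  (forall t : R, derivable w5 t 1) -> (forall t : R, derivable w6 t 1) ->
  (forall t : R, derive1 w1 t = 2 *: cross (w2 t) (w3 t)) ->
  (forall t : R, derive1 w2 t = 2 *: cross (w1 t) (w3 t)) ->
  (forall t : R, derive1 w3 t = - (2 *: cross (w1 t) (w2 t))) ->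
  (forall t : R, derive1 w4 t =
     cross (w1 t) (w5 t) + cross (w2 t) (w5 t) - cross (w3 t) (w4 t)) ->
  (forall t : R, derive1 w5 t =
     - cross (w1 t) (w4 t) + cross (w2 t) (w4 t) + cross (w3 t) (w5 t)) ->
  (forall t : R, derive1 w6 t = cross (w4 t) (w5 t)) ->
  let G := F w1 w2 w3 w4 w5 w6 in
  [/\ (forall y1 y2 t : R,
         cross (dy1 G y1 y2 t) (dy2 G y1 y2 t) = dt G y1 y2 t),
      (forall y1 y2 t : R,
         (injective (dG G y1 y2 t) <->
          free [:: dy1 G y1 y2 t; dy2 G y1 y2 t]))
    & (injective (dG G 0 0 0) <-> free [:: w4 0; w5 0])].
Proof.
move=> D1 D2 D3 D4 D5 D6 E1 E2 E3 E4 E5 E6 G.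
have P1 : forall y1 y2 t : R, cross (dy1 G y1 y2 t) (dy2 G y1 y2 t) = dt G y1 y2 t.
  move=> y1 y2 t; rewrite /G dy1E dy2E.
  rewrite (dtE _ _ _ _ _ _ _ _ _ _ (D1 t) (D2 t) (D3 t) (D4 t) (D5 t) (D6 t)).
  rewrite E1 E2 E3 E4 E5 E6.
  exact: part1_alg2.
have P2 : forall y1 y2 t : R,
    injective (dG G y1 y2 t) <-> free [:: dy1 G y1 y2 t; dy2 G y1 y2 t].
  move=> y1 y2 t.
  have -> : dG G y1 y2 t = (fun h : 'rV[R]_3 =>
      h 0 (@inord 2 0) *: dy1 G y1 y2 t + h 0 (@inord 2 1) *: dy2 G y1 y2 t
      + h 0 (@inord 2 2) *: cross (dy1 G y1 y2 t) (dy2 G y1 y2 t)).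
    by apply/funext => h; rewrite /dG P1.
  exact: inj_iff.
split => //.
rewrite P2 /G dy1E dy2E !(scale0r, add0r, subr0, oppr0).
by [].
Qed.
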